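(* Let $F(x)=\frac{1-x-\sqrt{1-2x-3x^2}}{2x^2}$ be the generating function of the Motzkin numbers. Then $D_{3,-3}(0)=1$, $D_{3,-3}(1)=D_{3,-3}(2)=D_{3,-3}(3)=0$, and for every integer $k\ge1$, $$D_{3,-3}(3k+1)=k,\qquad D_{3,-3}(3k+2)=0,\qquad D_{3,-3}(3k+3)=-k.$$
   Context: For a power series $F(x)=\sum_{n\ge0}a_nx^n$ and $K\ge1$, write $F(x)^K=\sum_{n\ge0}a_{K,n}x^n$ and set $a_{K,n}=0$ for $n<0$. For $M\in\mathbb{Z}$ and $K,N\in\mathbb{N}$ with $K\ge1$, define the shifted Hankel determinant $D_{K,M}(N)=\det(a_{K,i+j+M})_{i,j=0}^{N-1}$, with $D_{K,M}(0)=1$. *)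

(* Defs.v *)
From HB Require Import structures.
From mathcomp Require Import all_boot all_order all_algebra.
Set Implicit Arguments. Unset Strict Implicit. Unset Printing Implicit Defensive.
Import GRing.Theory.
Local Open Scope ring_scope.

(* Motzkin numbers via the standard recurrence
   M_0 = 1, M_{n+1} = M_n + sum_{i=0}^{n-1} M_i M_{n-1-i},
   equivalent to F = 1 + x F + x^2 F^2, whose power-series solution is
   F(x) = (1 - x - sqrt(1-2x-3x^2)) / (2x^2). *)
Definition motzkin_next (s : seq nat) : nat :=
  let n := (size s).-1 in
  (nth 0 s n + \sum_(i < n) nth 0 s i * nth 0 s (n.-1 - i))%N.

Fixpoint motzkin_list (n : nat) : seq nat :=
  match n with
  | 0 => [:: 1%N]
  | n'.+1 => let s := motzkin_list n' in rcons s (motzkin_next s)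
  end.

Definition motzkin (n : nat) : nat := nth 0%N (motzkin_list n) n.

Fixpoint pow_coef (a : nat -> int) (K n : nat) : int :=
  match K with
  | 0 => (n == 0%N)%:R
  | K'.+1 => \sum_(i < n.+1) a i * pow_coef a K' (n - i)
  end.

Definition coefK (a : nat -> int) (K : nat) (m : int) : int :=
  match m with
  | Posz n => pow_coef a K n
  | Negz _ => 0
  end.

Definition hankel_det (a : nat -> int) (K : nat) (M : int) (N : nat) : int :=
  \det (\matrix_(i < N, j < N) coefK a K ((i + j)%:Z + M)).

Definition motzkinZ (n : nat) : int := (motzkin n)%:Z.

(* Main.v *)
Require Import Defs.
From HB Require Import structures.
From mathcomp Require Import all_boot all_order all_algebra.
From mathcomp Require Import ring zify.
From Stdlib Require Import Lia.
Import GRing.Theory.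
Local Open Scope ring_scope.

Fixpoint W (n i j : nat) : int :=
  match n with
  | 0 => (i == j)%:R
  | n'.+1 => (if j is j'.+1 then W n' i j' else 0) + W n' i j + W n' i j.+1
  end.

Lemma W_recl n i j : W n.+1 i j =
  (if i is i'.+1 then W n i' j else 0) + W n i j + W n i.+1 j.
Proof.
elim: n i j => [|n IH] i j.
  by case: i => [|i]; case: j => [|j] /=; rewrite ?eqSS ?(eq_sym 0%N); ring.
have E0 : forall x, W n.+2 x 0 = 0 + W n.+1 x 0 + W n.+1 x 1 by [].
have ES : forall x y, W n.+2 x y.+1 = W n.+1 x y + W n.+1 x y.+1 + W n.+1 x y.+2 by [].
case: i => [|i]; case: j => [|j];
  rewrite ?[LHS]E0 ?[LHS]ES ![in LHS]IH /=; ring.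
Qed.

Lemma W_sym n i j : W n i j = W n j i.
Proof.
elim: n i j => [|n IH] i j; first by rewrite /= eq_sym.
rewrite [RHS]W_recl /=; case: j => [|j] /=; rewrite !(IH i) //.
Qed.

Lemma W_supp n i j : (i + n < j)%N -> W n i j = 0.
Proof.
elim: n j => [|n IH] j H /=.
  by rewrite addn0 in H; rewrite (ltn_eqF H).
case: j H => [|j] H; first lia.
rewrite !IH; [by rewrite !addr0 | lia..].
Qed.

Lemma W_supp' n i j : (j + n < i)%N -> W n i j = 0.
Proof. by move=> H; rewrite W_sym W_supp. Qed.

Lemma W_diag n i : W n i (i + n) = 1.
Proof.
elim: n => [|n IH] /=; first by rewrite addn0 eqxx.
rewrite addnS IH !W_supp ?addr0 ?add0r //; lia.
Qed.

Lemma sum_delta B (F : nat -> int) j :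
  \sum_(k < B) F k * (k == j :> nat)%:R = if (j < B)%N then F j else 0.
Proof.
elim: B => [|B IH]; first by rewrite big_ord0.
rewrite big_ord_recr /= IH.
case: (ltngtP j B) => H.
- by rewrite (ltn_trans H) // mulr0 addr0.
- by rewrite ltnNge H /= mulr0 addr0.
- by rewrite H ltnSn mulr1 add0r.
Qed.

Lemma W_CK a b i j B : (i + a < B)%N ->
  W (a + b) i j = \sum_(k < B) W a i k * W b k j.
Proof.
move=> HB; elim: b j => [|b IH] j.
  rewrite addn0 /= sum_delta; case: ifP => // /negbT; rewrite -leqNgt => H.
  rewrite W_supp //; lia.
rewrite addnS /=; case: j => [|j].
  rewrite !IH add0r -big_split /=; apply: eq_bigr => k _; ring.
rewrite !IH -!big_split /=; apply: eq_bigr => k _; ring.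
Qed.
Lemma size_ml n : size (motzkin_list n) = n.+1.
Proof. by elim: n => //= n IH; rewrite size_rcons IH. Qed.

Lemma nth_ml n d i : (i <= n)%N ->
  nth 0%N (motzkin_list (n + d)) i = nth 0%N (motzkin_list n) i.
Proof.
move=> Hi; elim: d => [|d IH]; first by rewrite addn0.
by rewrite addnS /= nth_rcons size_ml IH; have -> : (i < (n + d).+1)%N by lia.
Qed.

Lemma motzkin_ml n i : (i <= n)%N -> nth 0%N (motzkin_list n) i = motzkin i.
Proof. by move=> H; rewrite -(subnKC H) nth_ml. Qed.

Lemma motzkin_rec n : motzkin n.+1 =
  (motzkin n + \sum_(i < n) motzkin i * motzkin (n.-1 - i))%N.
Proof.
rewrite /motzkin /= nth_rcons size_ml ltnn eqxx /motzkin_next size_ml /=.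
rewrite motzkin_ml //; congr (_ + _)%N; apply: eq_bigr => i _.
have hi := ltn_ord i; rewrite (@motzkin_ml n i) ?(@motzkin_ml n (n.-1 - i)) //; lia.
Qed.

Definition PN N : {poly int} := \poly_(i < N) motzkinZ i.

Lemma pow_coefE N K n : (n < N)%N -> pow_coef motzkinZ K n = (PN N ^+ K)`_n.
Proof.
elim: K n => [|K IH] n Hn /=; first by rewrite expr0 coef1.
rewrite exprS coefM; apply: eq_bigr => i _.
rewrite IH ?coef_poly; last lia.
by have -> : (i < N)%N by case: i => /= i; lia.
Qed.

Lemma Emot N m : (m < N)%N ->
  (PN N)`_m = (1 + 'X * PN N + 'X^2 * PN N ^+ 2)`_m.
Proof.
move=> Hm; rewrite !coefD coef1 coefXM coefXnM coef_poly Hm.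
case: m Hm => [|m] Hm /=; first by rewrite /motzkinZ /motzkin /= !addr0.
rewrite add0r coef_poly ltnW //.
case: m Hm => [|m] Hm /=.
  by rewrite /motzkinZ motzkin_rec big_ord0 addn0 addr0.
rewrite subn2 /= expr2 coefM /motzkinZ motzkin_rec PoszD.
congr (_ + _); rewrite -natz natr_sum; apply: eq_bigr => i _.
rewrite natrM !natz !coef_poly /=.
have -> : (i < N)%N by case: i => /= i; lia.
by have -> : (m - i < N)%N by lia.
Qed.

Definition Q N k : {poly int} := 'X^k * PN N ^+ k.+1.

Lemma coefXS j (p : {poly int}) m : ('X^(j.+1) * p)`_(m.+1) = ('X^j * p)`_m.
Proof. by rewrite !coefXnM ltnS subSS. Qed.

Lemma Q_rec N n k : (n.+1 < N)%N -> (Q N k)`_(n.+1) =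
  (if k is k'.+1 then (Q N k')`_n else 0) + (Q N k)`_n + (Q N k.+1)`_n.
Proof.
move=> Hn; set P := PN N.
set E := P - (1 + 'X * P + 'X^2 * P ^+ 2).
have hE : forall m, (m < N)%N -> E`_m = 0.
  by move=> m Hm; rewrite /E coefB Emot // subrr.
have hpE : forall p m, (m < N)%N -> (p * E)`_m = 0.
  move=> p m Hm; rewrite coefM big1 // => i _; rewrite hE ?mulr0 //; lia.
case: k => [|k].
  rewrite /Q /= expr0 !mul1r expr1.
  have := @Emot N n.+1 Hn; rewrite !coefD coef1 coefXM coefXnM /= add0r => ->.
  rewrite coefXM; case: n Hn => [|n] Hn //=.
  by rewrite subn2.
have h1 : (Q N k)`_n = ('X^(k.+1) * P ^+ k.+1)`_(n.+1) by rewrite coefXS.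
have h2 : (Q N k.+1)`_n = ('X^(k.+2) * P ^+ k.+2)`_(n.+1) by rewrite coefXS.
have h3 : (Q N k.+2)`_n = ('X^(k.+3) * P ^+ k.+3)`_(n.+1) by rewrite coefXS.
rewrite h1 h2 h3 /Q.
apply/eqP; rewrite -subr_eq0 -!coefD -!coefB; apply/eqP.
have -> : 'X^(k.+1) * P ^+ k.+2 - ('X^(k.+1) * P ^+ k.+1 + 'X^(k.+2) * P ^+ k.+2 + 'X^(k.+3) * P ^+ k.+3)
   = ('X^(k.+1) * P ^+ k.+1) * E.
  rewrite /E !(exprS 'X) !(exprS P); ring.
by rewrite hpE.
Qed.

Lemma W0Q N n k : (n < N)%N -> W n 0 k = (Q N k)`_n.
Proof.
elim: n k => [|n IH] k Hn.
  rewrite /Q coefXnM; case: k => [|k] //=.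
  by rewrite expr1 coef_poly Hn.
rewrite Q_rec // -!IH; try lia.
by case: k => [|k] /=; rewrite ?IH //; lia.
Qed.

Lemma pow3W x : pow_coef motzkinZ 3 x = W x.+2 0 2.
Proof.
rewrite (@W0Q x.+3) // (@pow_coefE x.+3) // /Q. rewrite (coefXnM 2 (PN x.+3 ^+ 3) x.+2).
  have -> : (x.+2 < 2)%N = false by lia. by rewrite subn2.
by lia.
Qed.

Definition cc (m : nat) : int := if m is m'.+1 then W m' 0 2 else 0.

Lemma cK m : Defs.coefK motzkinZ 3 (m%:Z + (-3)) = cc m.
Proof.
case: m => [|[|[|m]]] //.
have -> : (m.+3)%:Z + -3 = m%:Z by rewrite -[m.+3]addn3 PoszD addrK.
by change (pow_coef motzkinZ 3 m = cc m.+3); rewrite pow3W.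
Qed.

Lemma sum_recl n (F : nat -> int) :
  \sum_(k < n.+1) F k = F 0%N + \sum_(k < n) F k.+1.
Proof. by rewrite big_ord_recl. Qed.

Definition L1f (i k : nat) : int :=
  match i, k with 0, 0 => 1 | i'.+1, k'.+1 => W i' 0 k' | _, _ => 0 end.
Definition Gf (k j : nat) : int := if k is k'.+1 then W j 2 k' else cc j.

Lemma S1 n i j : (i < n.+1)%N ->
  \sum_(k < n.+1) L1f i k * Gf k j = cc (i + j).
Proof.
move=> Hi; rewrite (sum_recl n (fun k => L1f i k * Gf k j)); case: i Hi => [|i] Hi /=.
  by rewrite mul1r big1 ?addr0 // => k _; rewrite mul0r.
rewrite mul0r add0r (@W_CK i j 0 2 n) //.
by apply: eq_bigr => k _; rewrite (W_sym j 2).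
Qed.

Definition rho (l : nat) : int := nth 0 [:: 1; -1; 0] (l %% 3).
Definition r (l : nat) : int := if (l < 3)%N then 0 else rho l.
Definition C2 (l a : nat) : int := W 2 l a - W 1 l a *+ 2.
Definition Kf (i l : nat) : int := if i is a.+1 then C2 l a else r l.

Lemma rho_sum k : rho k + rho k.+1 + rho k.+2 = 0.
Proof.
rewrite /rho -(addn2 k) -(addn1 k) -(modnDml k 1) -(modnDml k 2).
have := ltn_pmod k (isT : (0 < 3)%N).
by case: (k %% 3)%N => [|[|[|t]]].
Qed.

Lemma Ar k : (if k is k'.+1 then r k' else 0) + r k + r k.+1 = (k == 2%N)%:R.
Proof.
case: k => [|[|[|[|k]]]] //.
by rewrite /r /= (rho_sum k.+3).
Qed.

Lemma C2W a j B : (j < B)%N -> \sum_(l < B) C2 l a * W j 0 l = W j 2 a.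
Proof.
move=> Hj.
have e1 := @W_CK j 2 0 a B Hj.
have e2 := @W_CK j 1 0 a B Hj.
have -> : \sum_(l < B) C2 l a * W j 0 l =
   \sum_(l < B) W j 0 l * W 2 l a - (\sum_(l < B) W j 0 l * W 1 l a) *+ 2.
  rewrite -sumrMnl -sumrB; apply: eq_bigr => l _; rewrite /C2; ring.
rewrite -e1 -e2 addn2 addn1 !W_recl /=; ring.
Qed.

Lemma W1E l k : W 1 l k =
  (if k is k'.+1 then (l == k')%:R else 0) + (l == k)%:R + (l == k.+1)%:R.
Proof. by []. Qed.

Lemma rW1 B k : (k.+1 < B)%N -> \sum_(l < B) r l * W 1 l k =
  (if k is k'.+1 then r k' else 0) + r k + r k.+1.
Proof.
move=> Hk.
have -> : \sum_(l < B) r l * W 1 l k =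
  \sum_(l < B) r l * (if k is k'.+1 then (l == k' :> nat)%:R else 0)
  + \sum_(l < B) r l * (l == k :> nat)%:R + \sum_(l < B) r l * (l == k.+1 :> nat)%:R.
  by rewrite -!big_split; apply: eq_bigr => l _; rewrite W1E /=; ring.
rewrite !sum_delta (ltnW Hk) Hk; case: k Hk => [|k] Hk.
  by rewrite big1 // => l _; rewrite mulr0.
by rewrite sum_delta ltnW // ltnW.
Qed.

Lemma rW j B : (j < B)%N -> \sum_(l < B) r l * W j 0 l = cc j.
Proof.
case: j => [|j] Hj.
  rewrite /=; under eq_bigr => l _ do rewrite eq_sym.
  by rewrite sum_delta Hj.
have e : forall l : 'I_B, W j.+1 0 l = \sum_(k < B.+1) W 1 l k * W j k 0.
  move=> l; rewrite W_sym -add1n (@W_CK 1 j l 0 B.+1) //.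
  by have := ltn_ord l; lia.
under eq_bigr => l _ do rewrite e big_distrr.
rewrite exchange_big /=.
have -> : \sum_(k < B.+1) \sum_(l < B) r l * (W 1 l k * W j k 0) =
          \sum_(k < B.+1) W j k 0 * (k == 2%N :> nat)%:R.
  apply: eq_bigr => k _.
  have -> : \sum_(l < B) r l * (W 1 l k * W j k 0) = (\sum_(l < B) r l * W 1 l k) * W j k 0.
    by rewrite big_distrl; apply: eq_bigr => l _; rewrite mulrA.
  case: (leqP k j) => Hkj.
    rewrite rW1; [by rewrite Ar mulrC | lia].
  by rewrite (@W_supp' j k 0) ?mulr0 ?mul0r //; lia.
rewrite (sum_delta B.+1 (fun k => W j k 0)) /= W_sym; have -> : (2 < B.+1)%N by lia.
by [].
Qed.

Lemma S2 k j B : (j < B)%N -> \sum_(l < B) Kf k l * W j 0 l = Gf k j.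
Proof. by case: k => [|k] Hj /=; [apply: rW | apply: C2W]. Qed.

Definition sigma (b : nat) : int := nth 0 [:: 0; 1; 1; 0; -1; -1] (b %% 6).

Lemma sigma_sum a : sigma a.+4 + sigma a.+2 + sigma a = 0.
Proof.
rewrite /sigma -(addn4 a) -(addn2 a) -(modnDml a 4) -(modnDml a 2).
have := ltn_pmod a (isT : (0 < 6)%N).
by case: (a %% 6)%N => [|[|[|[|[|[|t]]]]]].
Qed.

Definition Kpf (i l : nat) : int :=
  if i is b.+1 then (l == b.+2)%:R + sigma b * (l == (b %% 2)%N)%:R else r l.
Definition Yf (i b : nat) : int :=
  match i, b with
  | 0, 0 => 1
  | a.+1, b'.+1 => (b' == a)%:R + (b'.+2 == a)%:R + (b'.+4 == a)%:R
  | _, _ => 0 end.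

Lemma YK a l : Kpf a.+1 l + (if a is a'.+2 then Kpf a'.+1 l else 0)
  + (if a is a'.+4 then Kpf a'.+1 l else 0) = Kf a.+1 l.
Proof.
rewrite /Kf /C2.
case: a => [|[|[|[|a]]]]; rewrite /= ?W1E /=; try ring.
have e1 : (a.+4 %% 2 = a %% 2)%N by rewrite !modn2 /= !negbK.
have e2 : (a.+2 %% 2 = a %% 2)%N by rewrite !modn2 /= !negbK.
rewrite e1 e2.
have hs : sigma a.+4 = - sigma a.+2 - sigma a by rewrite -[LHS]subr0 -(sigma_sum a); ring.
rewrite hs; ring.
Qed.

Lemma sum_delta2 B (F : nat -> int) a : (a < B)%N ->
  \sum_(b < B) ((b == a :> nat)%:R + (b.+2 == a)%:R + (b.+4 == a)%:R) * F b
  = F a + (if a is a'.+2 then F a' else 0) + (if a is a'.+4 then F a' else 0).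
Proof.
move=> Ha.
under eq_bigr => b _ do rewrite !mulrDl.
rewrite !big_split /=.
have h : forall x : nat, \sum_(b < B) (b == x :> nat)%:R * F b = F x * (x < B)%:R.
  move=> x; rewrite (eq_bigr (fun b : 'I_B => F b * (b == x :> nat)%:R)).
    by rewrite sum_delta; case: (x < B)%N; rewrite ?mulr1 ?mulr0.
  by move=> b _; rewrite mulrC.
rewrite h Ha mulr1; congr (_ + _ + _).
- case: a Ha => [|[|a]] Ha; try by rewrite big1 // => b _; rewrite mul0r.
  rewrite (eq_bigr (fun b : 'I_B => (b == a :> nat)%:R * F b)) ?h; last by move=> b _.
  have -> : (a < B)%N by lia.
  by rewrite mulr1.
- case: a Ha => [|[|[|[|a]]]] Ha; try by rewrite big1 // => b _; rewrite mul0r.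
  rewrite (eq_bigr (fun b : 'I_B => (b == a :> nat)%:R * F b)) ?h; last by move=> b _.
  have -> : (a < B)%N by lia.
  by rewrite mulr1.
Qed.

Lemma S3 n i l : (i < n.+1)%N ->
  \sum_(b < n.+1) Yf i b * Kpf b l = Kf i l.
Proof.
move=> Hi; rewrite (sum_recl n (fun b => Yf i b * Kpf b l)).
case: i Hi => [|a] Ha /=.
  by rewrite mul1r big1 ?addr0 // => b _; rewrite mul0r.
rewrite mul0r add0r (@sum_delta2 n (fun b => Kpf b.+1 l) a) //.
exact: YK.
Qed.

Lemma arrow m (B : 'M[int]_(m.+1)) :
  (forall x y : 'I_m, B (lift ord0 x) (lift ord0 y) = (x == y)%:R) ->
  \det B = B ord0 ord0 - \sum_(x < m) B ord0 (lift ord0 x) * B (lift ord0 x) ord0.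
Proof.
move=> HB.
set s := B ord0 ord0 - _.
pose U : 'M[int]_(m.+1) := \matrix_(i, j)
  if i == ord0 then (if j == ord0 then 1 else B ord0 j) else (i == j)%:R.
pose Lw : 'M[int]_(m.+1) := \matrix_(i, j)
  if i == ord0 then (if j == ord0 then s else 0) else B i j.
have eB : B = U *m Lw.
  apply/matrixP => i j; rewrite !mxE big_ord_recl !mxE.
  case: (unliftP ord0 i) => [i'|] ->; case: (unliftP ord0 j) => [j'|] -> /=.
  - rewrite mul0r add0r (bigD1 i') //= !mxE /= eqxx mul1r big1 ?addr0 // => x /negbTE.
    by rewrite !mxE /= (inj_eq lift_inj) eq_sym => ->; rewrite mul0r.
  - rewrite mul0r add0r (bigD1 i') //= !mxE /= eqxx mul1r big1 ?addr0 // => x /negbTE.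
    by rewrite !mxE /= (inj_eq lift_inj) eq_sym => ->; rewrite mul0r.
  - rewrite mul1r add0r (bigD1 j') //= !mxE /= HB eqxx mulr1 big1 ?addr0 // => x /negbTE.
    by rewrite !mxE /= HB => ->; rewrite mulr0.
  - rewrite mul1r /s; under eq_bigr => x _ do rewrite !mxE /=.
    ring.
rewrite eB det_mulmx.
have dU : \det U = 1.
  rewrite -det_tr det_trig; last first.
    apply/is_trig_mxP => i j Hij; rewrite !mxE.
    case: (unliftP ord0 j) => [j'|] Ej; last by rewrite Ej in Hij.
    have -> : (j == ord0) = false by rewrite Ej.
    have -> : (j == i) = false by apply/negP => /eqP E; rewrite E ltnn in Hij.
    by [].
  rewrite big1 // => i _; rewrite !mxE; case: ifP => [->|_]; by rewrite ?eqxx.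
have dL : \det Lw = s.
  rewrite det_trig; last first.
    apply/is_trig_mxP => i j Hij; rewrite !mxE.
    case: (unliftP ord0 i) => [i'|] Ei.
      case: (unliftP ord0 j) => [j'|] Ej.
        rewrite Ei Ej /= HB; have H : (i' < j')%N by rewrite Ei Ej /= in Hij.
        have -> : (i' == j') = false by apply/negP => /eqP E; rewrite E ltnn in H.
        by [].
      by rewrite Ej in Hij.
    rewrite Ei eqxx; case: (unliftP ord0 j) => [j'|] Ej; last by rewrite Ej Ei in Hij.
    by rewrite Ej.
  rewrite big_ord_recl !mxE eqxx big1 ?mulr1 // => x _.
  by rewrite !mxE /= HB eqxx.
by rewrite dU dL mul1r.
Qed.

Definition Spp (L p : nat) : int :=
  \sum_(x < L) r x.+2 * sigma x * (p == (x %% 2)%N)%:R.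

Lemma detKp m :
  \det (\matrix_(i < m.+2, l < m.+2) Kpf i l) =
  sigma m * ((-1) ^+ (m.+1 + (m %% 2))%N * (0 - Spp m (m %% 2 <= 0)%N)).
Proof.
set K := \matrix_(i, l) _.
have hc : ((m %% 2)%N < m.+2)%N by have := ltn_pmod m (isT : (0 < 2)%N); lia.
pose c0 : 'I_(m.+2) := Ordinal hc.
rewrite (expand_det_row _ ord_max) (bigD1 c0) //= big1 ?addr0; last first.
  move=> j Hj; rewrite mxE /= -[m.+2]/(m.+2)%N.
  have -> : (j == m.+2 :> nat) = false by have := ltn_ord j; lia.
  have -> : (j == (m %% 2)%N :> nat) = false.
    by apply/negP => /eqP E; move: Hj; rewrite -val_eqE /= E eqxx.
  by rewrite mulr0 addr0 mul0r.
rewrite mxE /= eqxx.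
have -> : ((m %% 2)%N == m.+2) = false by have := ltn_pmod m (isT : (0 < 2)%N); lia.
rewrite add0r mulr1 /cofactor /=; congr (_ * (_ * _)).
rewrite arrow.
- rewrite !mxE /= /bump /=.
  congr (_ - _); first by rewrite /r; case: (m %% 2 <= 0)%N.
  rewrite /Spp; apply: eq_bigr => x _; rewrite !mxE /= /bump /=.
  have -> : (m %% 2 <= x.+1)%N by have := ltn_pmod m (isT : (0 < 2)%N); lia.
  rewrite !add1n addn0.
  have -> : (m < x.+1)%N = false by have := ltn_ord x; lia.
  rewrite add0n /Kpf.
  have -> : ((m %% 2 <= 0)%N == x.+2 :> nat) = false by case: (m %% 2 <= 0)%N.
  by rewrite add0r mulrA.
- move=> x y; rewrite !mxE /= /bump /= !add1n.
  have -> : (m %% 2 <= y.+1)%N by have := ltn_pmod m (isT : (0 < 2)%N); lia.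
  have -> : (m < x.+1)%N = false by have := ltn_ord x; lia.
  rewrite add0n add1n /Kpf eqSS.
  have -> : (y.+2 == (x %% 2)%N) = false by have := ltn_pmod x (isT : (0 < 2)%N); lia.
  by rewrite mulr0 addr0 eqSS eq_sym.
Qed.

Lemma det_lut n (A : 'M[int]_n) :
  (forall i j : 'I_n, (i < j)%N -> A i j = 0) -> (forall i, A i i = 1) -> \det A = 1.
Proof.
move=> H1 H2; rewrite det_trig; first by rewrite big1.
by apply/is_trig_mxP.
Qed.

Lemma hankel_gen m : hankel_det motzkinZ 3 (-3) m.+2 =
  sigma m * ((-1) ^+ (m.+1 + (m %% 2))%N * (0 - Spp m (m %% 2 <= 0)%N)).
Proof.
rewrite /hankel_det -detKp.
pose L1 : 'M[int]_(m.+2) := \matrix_(i, k) L1f i k.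
pose G : 'M[int]_(m.+2) := \matrix_(k, j) Gf k j.
pose Km : 'M[int]_(m.+2) := \matrix_(i, l) Kf i l.
pose T : 'M[int]_(m.+2) := \matrix_(j, l) W j 0 l.
pose Y : 'M[int]_(m.+2) := \matrix_(i, b) Yf i b.
pose Kp : 'M[int]_(m.+2) := \matrix_(i, l) Kpf i l.
have e1 : \matrix_(i < m.+2, j < m.+2) Defs.coefK motzkinZ 3 ((i + j)%:Z + -3) = L1 *m G.
  apply/matrixP => i j; rewrite !mxE cK.
  rewrite -(@S1 m.+1 i j (ltn_ord i)); apply: eq_bigr => k _; by rewrite !mxE.
have e2 : G = Km *m T^T.
  apply/matrixP => k j; rewrite !mxE -(@S2 k j m.+2 (ltn_ord j)).
  by apply: eq_bigr => l _; rewrite !mxE.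
have e3 : Km = Y *m Kp.
  apply/matrixP => i l; rewrite !mxE -(@S3 m.+1 i l (ltn_ord i)).
  by apply: eq_bigr => b _; rewrite !mxE.
have d1 : \det L1 = 1.
  apply: det_lut => [i j Hij|i]; rewrite !mxE.
    case: i Hij => [[|i] Hi] /=; case: j => [[|j] Hj] //= Hij.
    apply: W_supp; lia.
  case: i => [[|i] Hi] //=; exact: (W_diag i 0).
have dT : \det T^T = 1.
  rewrite det_tr; apply: det_lut => [i j Hij|i]; rewrite !mxE.
    apply: W_supp; lia.
  exact: (W_diag i 0).
have dY : \det Y = 1.
  apply: det_lut => [i j Hij|i]; rewrite !mxE.
    case: i Hij => [[|i] Hi] /=; case: j => [[|j] Hj] //= Hij.
    have -> : (j == i) = false by lia.
    have -> : (j.+2 == i) = false by lia.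
    have -> : (j.+4 == i) = false by lia.
    by rewrite !addr0.
  case: i => [[|i] Hi] //=.
  have -> : (i.+2 == i) = false by lia.
  have -> : (i.+4 == i) = false by lia.
  by rewrite eqxx !addr0.
by rewrite e1 e2 e3 !det_mulmx d1 dT dY !mul1r mulr1.
Qed.

Lemma mod2_6 q s : ((6 * q + s) %% 2 = s %% 2)%N.
Proof. by rewrite (_ : 6 * q = (3 * q) * 2)%N ?modnMDl //; lia. Qed.

Lemma sigma_per q s : sigma (6 * q + s) = sigma s.
Proof. by rewrite /sigma mulnC modnMDl. Qed.

Lemma rho_per l : rho (l + 6) = rho l.
Proof. by rewrite /rho (_ : l + 6 = 2 * 3 + l)%N ?modnMDl //; lia. Qed.

Lemma Spp_S L p : Spp L.+1 p = Spp L p + r L.+2 * sigma L * (p == (L %% 2)%N)%:R.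
Proof. by rewrite /Spp big_ord_recr. Qed.

Lemma Spp_6 x p : Spp (x + 6) p = Spp x p + Spp 6 p.
Proof.
elim: x => [|x IH]; first by rewrite /Spp big_ord0 add0r.
rewrite addSn (Spp_S (x + 6)) (Spp_S x) IH.
have h1 : r (x + 6).+2 = r x.+2.
  rewrite /r; case: x IH => [|x] _ //=.
  by rewrite (_ : (x.+1 + 6).+2 = x.+3 + 6)%N ?rho_per //; lia.
have h2 : sigma (x + 6) = sigma x by rewrite addnC (sigma_per 1 x).
have h3 : ((x + 6) %% 2 = x %% 2)%N by rewrite addnC (mod2_6 1 x).
rewrite h1 h2 h3; ring.
Qed.

Lemma Spp_per q s p : Spp (6 * q + s) p = q%:Z * Spp 6 p + Spp s p.
Proof.
elim: q => [|q IH]; first by rewrite mul0r add0r.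
rewrite (_ : 6 * q.+1 + s = (6 * q + s) + 6)%N; last lia.
by rewrite Spp_6 IH -[q.+1]addn1 PoszD; ring.
Qed.

Lemma Spp61 : Spp 6 1 = 2.
Proof. by rewrite /Spp !big_ord_recr big_ord0 /=. Qed.
Lemma Spp60 : Spp 6 0 = -2.
Proof. by rewrite /Spp !big_ord_recr big_ord0 /=. Qed.

Lemma signE q t : (-1 : int) ^+ (6 * q + t)%N = (-1) ^+ t.
Proof. by rewrite exprD exprM (_ : (-1 : int) ^+ 6 = 1) ?expr1n ?mul1r. Qed.

Lemma hk q s : hankel_det motzkinZ 3 (-3) (6 * q + s).+2 =
  sigma s * ((-1) ^+ (s.+1 + s %% 2)%N *
     (0 - (q%:Z * Spp 6 (s %% 2 <= 0)%N + Spp s (s %% 2 <= 0)%N))).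
Proof.
rewrite hankel_gen sigma_per mod2_6 Spp_per.
by rewrite (_ : ((6 * q + s).+1 + s %% 2 = 6 * q + (s.+1 + s %% 2))%N) ?signE //; lia.
Qed.

Lemma Spp21 : Spp 2 1 = 1. Proof. by rewrite /Spp !big_ord_recr big_ord0 /=. Qed.
Lemma Spp41 : Spp 4 1 = 1. Proof. by rewrite /Spp !big_ord_recr big_ord0 /=. Qed.
Lemma Spp50 : Spp 5 0 = -2. Proof. by rewrite /Spp !big_ord_recr big_ord0 /=. Qed.
Lemma Spp10 : Spp 1 0 = 0. Proof. by rewrite /Spp !big_ord_recr big_ord0 /=. Qed.

Theorem proposition4p2 :
  hankel_det motzkinZ 3 (-3) 0 = 1 /\
  hankel_det motzkinZ 3 (-3) 1 = 0 /\
  hankel_det motzkinZ 3 (-3) 2 = 0 /\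
  hankel_det motzkinZ 3 (-3) 3 = 0 /\
  (forall k : nat, (1 <= k)%N ->
     hankel_det motzkinZ 3 (-3) (3 * k + 1) = k%:Z /\
     hankel_det motzkinZ 3 (-3) (3 * k + 2) = 0 /\
     hankel_det motzkinZ 3 (-3) (3 * k + 3) = - k%:Z).
Proof.
have s0 : sigma 0 = 0 by [].
have s1 : sigma 1 = 1 by [].
have s2 : sigma 2 = 1 by [].
have s3 : sigma 3 = 0 by [].
have s4 : sigma 4 = -1 by [].
have s5 : sigma 5 = -1 by [].
split; first by rewrite /hankel_det det_mx00.
split.
  rewrite /hankel_det (expand_det_row _ ord0) big1 // => j _.
  by rewrite !mxE cK (ord1 j) /= mul0r.
split; first by rewrite (hankel_gen 0) s0 mul0r.
split; first by rewrite (hankel_gen 1) s1 Spp10 /=.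
move=> k Hk.
have [q [-> | ->]] : exists q, k = (2 * q + 1)%N \/ k = (2 * q + 2)%N.
  by exists ((k - 1) %/ 2)%N; lia.
- split.
    rewrite (_ : 3 * (2 * q + 1) + 1 = (6 * q + 2).+2)%N; last lia.
    rewrite hk s2 Spp61 Spp21 !modn2 /= ?PoszD ?PoszM; ring.
  split.
    rewrite (_ : 3 * (2 * q + 1) + 2 = (6 * q + 3).+2)%N; last lia.
    by rewrite hk s3 mul0r.
  rewrite (_ : 3 * (2 * q + 1) + 3 = (6 * q + 4).+2)%N; last lia.
  rewrite hk s4 Spp61 Spp41 !modn2 /= ?PoszD ?PoszM; ring.
- split.
    rewrite (_ : 3 * (2 * q + 2) + 1 = (6 * q + 5).+2)%N; last lia.
    rewrite hk s5 Spp60 Spp50 !modn2 /= ?PoszD ?PoszM; ring.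
  split.
    rewrite (_ : 3 * (2 * q + 2) + 2 = (6 * (q + 1) + 0).+2)%N; last lia.
    by rewrite hk s0 mul0r.
  rewrite (_ : 3 * (2 * q + 2) + 3 = (6 * (q + 1) + 1).+2)%N; last lia.
  rewrite hk s1 Spp60 Spp10 !modn2 /= ?PoszD ?PoszM; ring.
Qed.
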